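(* Any finite product of matrices from the set $\{A_{(0,0)},A_{(1,0)},A_{(0,1)},A_{(1,1)}\}$ has at most one row all of whose entries are zero.
   Context: $A_{(0,0)}=\begin{pmatrix}3&1&1&1\\0&1&0&0\\0&0&1&0\\0&0&0&1\end{pmatrix}$, $A_{(1,0)}=\begin{pmatrix}1&0&1&0\\1&3&0&1\\0&0&0&0\\0&0&1&1\end{pmatrix}$, $A_{(0,1)}=\begin{pmatrix}1&1&0&0\\0&0&0&0\\1&0&3&1\\0&1&0&1\end{pmatrix}$, $A_{(1,1)}=\begin{pmatrix}1&0&0&0\\0&1&0&0\\0&0&1&0\\1&1&1&3\end{pmatrix}$. *)

(* Defs.v *)
From mathcomp Require Import all_boot all_order all_algebra.
Set Implicit Arguments. Unset Strict Implicit. Unset Printing Implicit Defensive.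
Import GRing.Theory.
Local Open Scope ring_scope.


(* The four 4x4 integer matrices A_(a,b), indexed by (a,b) in bool * bool
   (false = 0, true = 1). *)
Definition mxA (ab : bool * bool) : 'M[int]_4 :=
  match ab with
  | (false, false) => \matrix_(i < 4, j < 4) (
      nth [::] ([:: [:: 3; 1; 1; 1]; [:: 0; 1; 0; 0]; [:: 0; 0; 1; 0]; [:: 0; 0; 0; 1]] : seq (seq int)) i)`_j
  | (true, false) => \matrix_(i < 4, j < 4) (
      nth [::] ([:: [:: 1; 0; 1; 0]; [:: 1; 3; 0; 1]; [:: 0; 0; 0; 0]; [:: 0; 0; 1; 1]] : seq (seq int)) i)`_j
  | (false, true) => \matrix_(i < 4, j < 4) (
      nth [::] ([:: [:: 1; 1; 0; 0]; [:: 0; 0; 0; 0]; [:: 1; 0; 3; 1]; [:: 0; 1; 0; 1]] : seq (seq int)) i)`_j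
  | (true, true) => \matrix_(i < 4, j < 4) (
      nth [::] ([:: [:: 1; 0; 0; 0]; [:: 0; 1; 0; 0]; [:: 0; 0; 1; 0]; [:: 1; 1; 1; 3]] : seq (seq int)) i)`_j
  end.

Definition mxprod (w : seq (bool * bool)) : 'M[int]_4 :=
  \prod_(ab <- w) mxA ab.

Definition zero_row (M : 'M[int]_4) (i : 'I_4) : bool :=
  [forall j, M i j == 0].

(* Main.v *)
Require Import Defs.
From mathcomp Require Import all_boot all_order all_algebra.
Import GRing.Theory Num.Theory Order.TTheory.

Local Open Scope ring_scope.

Definition eA (ab : bool * bool) (i k : 'I_4) : int :=
  match ab with
  | (false, false) => (nth [::] ([:: [:: 3; 1; 1; 1]; [:: 0; 1; 0; 0]; [:: 0; 0; 1; 0]; [:: 0; 0; 0; 1]] : seq (seq int)) i)`_k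
  | (true, false) => (nth [::] ([:: [:: 1; 0; 1; 0]; [:: 1; 3; 0; 1]; [:: 0; 0; 0; 0]; [:: 0; 0; 1; 1]] : seq (seq int)) i)`_k
  | (false, true) => (nth [::] ([:: [:: 1; 1; 0; 0]; [:: 0; 0; 0; 0]; [:: 1; 0; 3; 1]; [:: 0; 1; 0; 1]] : seq (seq int)) i)`_k
  | (true, true) => (nth [::] ([:: [:: 1; 0; 0; 0]; [:: 0; 1; 0; 0]; [:: 0; 0; 1; 0]; [:: 1; 1; 1; 3]] : seq (seq int)) i)`_k
  end.

Lemma mxAE a i k : mxA a i k = eA a i k.
Proof. by case: a => [[] []]; rewrite mxE. Qed.

Lemma eA_ge0 a i k : 0 <= eA a i k.
Proof. by move: a i k => [[] []] [[|[|[|[|?]]]] ?] [[|[|[|[|?]]]] ?]. Qed.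

Lemma eA_ge0' a i k : 0 <= mxA a i k.
Proof. by rewrite mxAE eA_ge0. Qed.

Definition ord4 : seq 'I_4 :=
  [:: Ordinal (isT : (0 < 4)%N); Ordinal (isT : (1 < 4)%N);
      Ordinal (isT : (2 < 4)%N); Ordinal (isT : (3 < 4)%N)].

Definition Pb a (kB : option 'I_4) (i : 'I_4) : bool :=
  all (fun k => (eA a i k != 0) ==> (Some k == kB)) ord4.

Lemma Pb_uniq a kB i1 i2 : Pb a kB i1 -> Pb a kB i2 -> i1 = i2.
Proof.
move: a kB i1 i2 => [[] []] [[[|[|[|[|n0]]]] h0]|] [[|[|[|[|n1]]]] h1] [[|[|[|[|n2]]]] h2];
  try (by []); try (by move: h0); try (by move: h1); try (by move: h2);
  move=> H1 H2; apply: val_inj => /=; vm_compute in H1; vm_compute in H2; congruence.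
Qed.

Lemma mxprod_cons a w : mxprod (a :: w) = mxA a *m mxprod w.
Proof. by rewrite /mxprod big_cons. Qed.

Lemma mxprod_ge0 w i j : 0 <= mxprod w i j.
Proof.
elim: w i j => [|a w IH] i j.
  by rewrite /mxprod big_nil mxE ler0n.
rewrite mxprod_cons mxE; apply: sumr_ge0 => k _.
by rewrite mulr_ge0 // mxAE eA_ge0.
Qed.

Lemma main w : exists kB : option 'I_4,
  forall i, zero_row (mxprod w) i -> Some i = kB.
Proof.
elim: w => [|a w [kB IH]].
  exists None => i /forallP /(_ i).
  by rewrite /mxprod big_nil mxE eqxx.
exists [pick i | Pb a kB i] => i /forallP Hz.
have Pi : Pb a kB i.
  apply/allP => k _; apply/implyP => Hk; apply/eqP; apply: IH.
  apply/forallP => j; move: (Hz j); rewrite mxprod_cons mxE => /eqP.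
  move/psumr_eq0P => H.
  have /eqP := H (fun l _ => mulr_ge0 (eA_ge0' a i l) (mxprod_ge0 w l j)) k isT.
  by rewrite mulf_eq0 mxAE (negbTE Hk) /=.
case: pickP => [i' Hi'|/(_ i)]; last by rewrite Pi.
by congr Some; apply: Pb_uniq Pi Hi'.
Qed.

Theorem lemma7p2 (w : seq (bool * bool)) :
  (#|[pred i : 'I_4 | zero_row (mxprod w) i]| <= 1)%N.
Proof.
have [kB H] := main w.
rewrite leqNgt; apply/negP => /card_gt1P [x [y [Hx Hy Hxy]]].
move: (H x Hx) (H y Hy) => <- [] Exy.
by rewrite Exy eqxx in Hxy.
Qed.
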